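(* Let $\lambda$ be a composition of $n$ and $a<b$ two peaks of $\lambda$. Then $$\mathbb{P}_\lambda(1\in\lambda_{>a,<b})\le2\,\frac{b-a}{n}.$$
   Context: A composition $\lambda$ of $n$ is encoded by its descent set $D_\lambda\subset[1,n-1]$; a cell $i\in[1,n]$ is a peak if $i\in D_\lambda\cup\{n\}$ and $i-1\notin D_\lambda$. $\mathbb{P}_\lambda(1\in\lambda_{>a,<b})$ is the probability that, for $\sigma$ uniform on $\{\sigma\in\mathfrak{S}_n: des(\sigma)=D_\lambda\}$ ($des(\sigma)=\{i:\sigma(i+1)<\sigma(i)\}$), the position $\sigma^{-1}(1)$ of the letter $1$ satisfies $a<\sigma^{-1}(1)<b$. *)

(* Defs.v *)
(* Permutations of [1,n] are modelled by 'S_n acting on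
   'I_n = {0,...,n-1}; position i (1-indexed) is ordinal i-1, letter k is
   ordinal k-1. *)
From mathcomp Require Import all_boot all_order all_fingroup all_algebra.
Set Implicit Arguments. Unset Strict Implicit. Unset Printing Implicit Defensive.
Import GRing.Theory Num.Theory.

(* value (0-indexed) of sigma at the 0-indexed position k, or 0 if k >= n *)
Definition val_at (n : nat) (s : 'S_n) (k : nat) : nat :=
  if insub k is Some i then val (s i) else 0.

(* i (1-indexed, in [1,n-1]) is a descent of s: s(i+1) < s(i) *)
Definition is_des (n : nat) (s : 'S_n) (i : nat) : bool :=
  (0 < i < n) && (val_at s i < val_at s i.-1).

Definition has_des (n : nat) (D : pred nat) (s : 'S_n) : bool :=
  [forall i : 'I_n, is_des s i == D i].

Definition pos1 (n : nat) (s : 'S_n) : nat :=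
  if insub 0 is Some z then (val ((s^-1)%g z)).+1 else 0.

(* i in [1,n] is a peak of the composition with descent set D *)
Definition is_peak (n : nat) (D : pred nat) (i : nat) : bool :=
  [&& 1 <= i <= n, D i || (i == n) & ~~ D i.-1].

Definition prob_one_between (n : nat) (D : pred nat) (a b : nat) : rat :=
  (#|[set s : 'S_n | has_des D s && (a < pos1 s < b)%N]|%:R
   / #|[set s : 'S_n | has_des D s]|%:R)%R.

(* Main.v *)
Set Warnings "-notation-overridden,-ambiguous-paths".
Require Import Defs.
From mathcomp Require Import all_boot all_order all_fingroup all_algebra.
From mathcomp Require Import zify.
Import GRing.Theory Num.Theory.
Set Implicit Arguments. Unset Strict Implicit.

Lemma val_atE n (s : 'S_n) (x : 'I_n) : val_at s x = val (s x).
Proof. by rewrite /val_at valK. Qed.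

Lemma tperm_lt n (x y u v : 'I_n) : val y = (val x).+1 ->
  ~~ ((u == x) && (v == y)) -> ~~ ((u == y) && (v == x)) -> u != v ->
  (val (tperm x y u) < val (tperm x y v)) = (val u < val v).
Proof.
move=> e h1 h2 h3.
have key : forall w : 'I_n, val (tperm x y w) =
   if val w == val x then val y else if val w == val y then val x else val w.
  move=> w; case: tpermP => [->|->|nx ny]; rewrite ?eqxx //.
    by rewrite e; case: eqP => //; lia.
  by case: eqP => [/val_inj//|_]; case: eqP => [/val_inj//|_].
have vne : forall w w' : 'I_n, (w != w') = (val w != val w') by [].
rewrite !key; move: h1 h2 h3; rewrite !negb_and !vne e.
by do ! case: eqP => //=; lia.
Qed.

Lemma swap_des n (D : pred nat) (a b : nat) (ha : ~~ D a.-1) (ha1 : 1 <= a)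
  (hb : D b || (b == n)) (hab : a < b) (s : 'S_n) (x y : 'I_n) :
  has_des D s -> val y = (val x).+1 ->
  (a <= ((s^-1)%g x).+1 <= b) -> ~~ (a <= ((s^-1)%g y).+1 <= b) ->
  has_des D (s * tperm x y)%g.
Proof.
move=> /forallP Hs e Wx Wy; apply/forallP => i; rewrite -(eqP (Hs i)); apply/eqP.
rewrite /is_des; case: i => [[|i] hi] //=.
have hp : i < n by apply: ltnW.
have Hq := Hs (Ordinal hi); have Hp := Hs (Ordinal hp).
rewrite /is_des /= in Hq.
rewrite (val_atE _ (Ordinal hi)) (val_atE _ (Ordinal hp)) in Hq *.
rewrite (val_atE _ (Ordinal hi)) (val_atE _ (Ordinal hp)) !permM.
set q := Ordinal hi; set p := Ordinal hp.
have qp : s q != s p.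
  by apply/eqP => /perm_inj /(congr1 val) /=; lia.
case: (boolP ((s q == x) && (s p == y))) => [/andP[/eqP sq /eqP sp]|h1].
  exfalso; move: Wx Wy; rewrite -sq -sp !permK /=.
  move: Hq; rewrite sq sp e ltnSn hi /= => /eqP Hq.
  move=> W1 W2; have ea : a = i.+2 by lia.
  by move: ha; rewrite ea /= -Hq.
case: (boolP ((s q == y) && (s p == x))) => [/andP[/eqP sq /eqP sp]|h2].
  exfalso; move: Wx Wy; rewrite -sq -sp !permK /=.
  move=> W1 W2; have eb : b = i.+1 by lia.
  move: hb Hq; rewrite eb sq sp e hi /=.
  have -> : ((val x).+1 < val x) = false by lia.
  have -> : (i.+1 == n) = false by apply/eqP; lia.
  by rewrite orbF => ->.
by rewrite tperm_lt.
Qed.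
Lemma step_le n (B : {set 'S_n}) (W : pred 'I_n) (x y : 'I_n) :
  (forall s, s \in B -> W ((s^-1)%g x) -> ~~ W ((s^-1)%g y) -> (s * tperm x y)%g \in B) ->
  #|[set s in B | W ((s^-1)%g x)]| <= #|[set s in B | W ((s^-1)%g y)]|.
Proof.
move=> HB.
have Hy : forall s : 'S_n, (((s * tperm x y)%g : 'S_n)^-1)%g y = (s^-1)%g x.
  by move=> s; rewrite invMg tpermV permM tpermR.
have Hx : forall s : 'S_n, (((s * tperm x y)%g : 'S_n)^-1)%g x = (s^-1)%g y.
  by move=> s; rewrite invMg tpermV permM tpermL.
pose f (s : 'S_n) := if W ((s^-1)%g y) then s else (s * tperm x y)%g.
rewrite -(card_in_imset (f := f)); last first.
  move=> s1 s2; rewrite !inE => /andP[B1 W1] /andP[B2 W2]; rewrite /f.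
  case: ifP => h1; case: ifP => h2.
  - by [].
  - by move=> E; move: W1; rewrite E Hx h2.
  - by move=> E; move: W2; rewrite -E Hx h1.
  - by move/mulIg.
apply: subset_leq_card; apply/subsetP => t /imsetP[s]; rewrite inE => /andP[Bs Ws] ->.
rewrite /f inE; case: ifP => h.
  by rewrite Bs h.
by rewrite HB ?h // Hy.
Qed.

Lemma sum_le n (B : {set 'S_n}) (W : pred 'I_n) (z : 'I_n) :
  (forall j : 'I_n, #|[set s in B | W ((s^-1)%g z)]| <= #|[set s in B | W ((s^-1)%g j)]|) ->
  n * #|[set s in B | W ((s^-1)%g z)]| <= #|W| * #|B|.
Proof.
move=> H.
have E j : #|[set s in B | W ((s^-1)%g j)]| = \sum_(s in B) (W ((s^-1)%g j) : nat).
  rewrite -sum1_card big_mkcond [RHS]big_mkcond /=; apply: eq_bigr => s _.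
  by rewrite inE; case: (s \in B); case: (W _).
rewrite -[X in X * _]card_ord -sum_nat_const.
apply: (@leq_trans (\sum_(j in 'I_n) #|[set s in B | W ((s^-1)%g j)]|)).
  by apply: leq_sum => j _.
rewrite (eq_bigr _ (fun j _ => E j)) exchange_big /= mulnC -sum_nat_const.
apply: eq_leq; apply: eq_bigr => s _.
rewrite (reindex_inj (@perm_inj _ s)) /=.
rewrite -sum1_card [RHS]big_mkcond /=; apply: eq_bigr => j _.
by rewrite permK -topredE /=; case: (W j).
Qed.

Lemma card_W n (a b : nat) : #|[pred z : 'I_n | a <= z.+1 <= b]| <= b.+1 - a.
Proof.
rewrite cardE -(size_map val) -(size_iota a.-1 (b.+1 - a)).
apply: uniq_leq_size; first by rewrite map_inj_uniq ?enum_uniq //; apply: val_inj.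
move=> t /mapP[z]; rewrite mem_enum inE => hz ->.
rewrite mem_iota; move: hz => /andP[h1 h2]; rewrite /=; lia.
Qed.

Unset Implicit Arguments.
Set Strict Implicit.

Theorem lemma22 (n : nat) (D : pred nat)
  (hD : forall i, D i -> 0 < i < n)
  (a b : nat) (ha : is_peak n D a) (hb : is_peak n D b) (hab : a < b) :
  (prob_one_between n D a b <= 2%:R * (b - a)%:R / n%:R)%R.
Proof.
move: ha hb; rewrite /is_peak => /and3P[/andP[a1 an] _ na] /and3P[/andP[b1 bn] hbD _].
pose B := [set s : 'S_n | has_des D s].
pose W := [pred z : 'I_n | a <= z.+1 <= b].
have n0 : 0 < n by lia.
pose z0 := Ordinal n0.
have step : forall k (hk : k < n),
    #|[set s in B | W ((s^-1)%g z0)]| <= #|[set s in B | W ((s^-1)%g (Ordinal hk))]|.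
  elim=> [|k IH] hk.
    by rewrite (_ : Ordinal hk = z0) //; apply: val_inj.
  have hk' : k < n by lia.
  apply: (leq_trans (IH hk')); apply: step_le => s.
  rewrite !inE => Bs Wx Wy; apply: swap_des Bs _ Wx Wy => //.
have main : n * #|[set s in B | W ((s^-1)%g z0)]| <= #|W| * #|B|.
  apply: sum_le => j; case: j => k hk; exact: step.
have sub : #|[set s : 'S_n | has_des D s && (a < pos1 s < b)]| <= #|[set s in B | W ((s^-1)%g z0)]|.
  apply: subset_leq_card; apply/subsetP => s; rewrite !inE => /andP[-> h] /=.
  move: h; rewrite /pos1; case: insubP => [u _ hu|]; last by rewrite /= n0.
  rewrite (_ : u = z0); last by apply: val_inj.
  by case/andP => h1 h2; rewrite (ltnW h1) (ltnW h2).
have cW := card_W n a b.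
rewrite /prob_one_between.
set E := #|[set s : 'S_n | has_des D s && _]|.
have -> : #|[set s : 'S_n | has_des D s]| = #|B| by [].
set N := #|B|.
have hN : E * n <= 2 * (b - a) * N.
  rewrite mulnC; apply: (leq_trans (leq_mul (leqnn n) sub)).
  apply: (leq_trans main); apply: leq_mul => //; apply: (leq_trans cW); lia.
case: (posnP N) => [->|Npos]; first by rewrite invr0 mulr0 !mulr_ge0 ?invr_ge0 ?ler0n.
rewrite ler_pdivrMr ?ltr0n // mulrAC ler_pdivlMr ?ltr0n //.
by rewrite -!natrM ler_nat.
Qed.
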